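(* Let $a=(a_1,\dots,a_m)$ and $a'$ be two compositions such that the multisets $M(a)=\{a_1,\dots,a_m\}$ and $M(a')$ are equal (i.e. $a'$ is a rearrangement of $a$). Then for every $n\ge 0$, the number of compositions of size $n$ that dominate $a$ equals the number of compositions of size $n$ that dominate $a'$.
   Context: A composition is a finite sequence of positive integers; its size is the sum of its components and its length is the number of components. A composition $b=(b_1,\dots,b_k)$ dominates $a=(a_1,\dots,a_m)$ if there are indices $1\le i(1)<i(2)<\dots<i(m)\le k$ with $a_j\le b_{i(j)}$ for every $j\in[m]$. *)

(* Defs.v *)
From mathcomp Require Import all_boot.
Set Implicit Arguments. Unset Strict Implicit. Unset Printing Implicit Defensive.

(* A composition: finite sequence of positive integers. Size = sumn, length = size. *)
Definition is_composition (a : seq nat) : Prop := all (fun x => 0 < x) a.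

Definition dominates (b a : seq nat) : Prop :=
  exists f : 'I_(size a) -> 'I_(size b),
    (forall j1 j2 : 'I_(size a), j1 < j2 -> f j1 < f j2) /\
    (forall j : 'I_(size a), nth 0 a j <= nth 0 b (f j)).

(* Main.v *)
Require Import Defs.
From mathcomp Require Import all_boot ssralg poly zify.
Set Implicit Arguments. Unset Strict Implicit. Unset Printing Implicit Defensive.

Definition conv (f g : nat -> nat) (n : nat) : nat := \sum_(i < n.+1) f i * g (n - i).

Definition tp (N : nat) (f : nat -> nat) : {poly nat} := \poly_(i < N.+1) f i.

Lemma tp_coef N f k : k <= N -> ((tp N f)`_k)%R = f k.
Proof. by move=> hk; rewrite /tp coef_poly ltnS hk. Qed.

Lemma conv_poly N f g k : k <= N -> conv f g k = ((tp N f * tp N g)`_k)%R.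
Proof.
move=> hk; rewrite coefM /conv; apply: eq_bigr => i _.
have hi : (i <= N) by apply: leq_trans (ltnSE (ltn_ord i)) hk.
rewrite !tp_coef //; apply: leq_trans (leq_subr _ _) hk.
Qed.

Lemma convA f g h n : conv f (conv g h) n = conv (conv f g) h n.
Proof.
have -> : conv f (conv g h) n = ((tp n f * (tp n g * tp n h))`_n)%R.
  rewrite coefM; apply: eq_bigr => i _.
  have hi : (i <= n) by exact: ltnSE (ltn_ord i).
  by rewrite tp_coef // (conv_poly g h (leq_subr i n)).
have -> : conv (conv f g) h n = ((tp n f * tp n g * tp n h)`_n)%R.
  rewrite coefM; apply: eq_bigr => i _.
  have hi : (i <= n) by exact: ltnSE (ltn_ord i).
  by rewrite (tp_coef h (leq_subr i n)) (conv_poly f g hi).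
have E := (@GRing.mulrA {poly nat} (tp n f) (tp n g) (tp n h)).
exact: (congr1 (fun p : {poly nat} => (p`_n)%R) E).
Qed.

Lemma convC f g n : conv f g n = conv g f n.
Proof.
rewrite /conv (reindex_inj rev_ord_inj) /=; apply: eq_bigr => i _.
have hi : i <= n by exact: ltnSE (ltn_ord i).
by rewrite subSS (subKn hi) mulnC.
Qed.

Lemma conv_ext f f' g g' n : f =1 f' -> g =1 g' -> conv f g n = conv f' g' n.
Proof. by move=> hf hg; rewrite /conv; apply: eq_bigr => i _; rewrite hf hg. Qed.

Lemma convDl f f' g n : conv (fun k => f k + f' k) g n = conv f g n + conv f' g n.
Proof. by rewrite /conv -big_split; apply: eq_bigr => i _; rewrite mulnDl. Qed.

Definition delta (k : nat) : nat := (k == 0).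

Fixpoint solve (R Q : nat -> nat) fuel n : nat :=
  if fuel is k.+1 then R n + conv Q (solve R Q k) n else 0.

Definition Sol R Q n := solve R Q n.+1 n.

Lemma solve_fuel R Q : Q 0 = 0 -> forall k1 k2 n, n < k1 -> n < k2 ->
  solve R Q k1 n = solve R Q k2 n.
Proof.
move=> Q0; elim=> [|j1 IH] [|j2] n //= h1 h2.
congr (_ + _); apply: eq_bigr => i _.
case: (posnP i) => [->|ip]; first by rewrite Q0.
have hi := ltn_ord i.
congr (_ * _); apply: IH; lia.
Qed.

Lemma SolE R Q : Q 0 = 0 -> forall n, Sol R Q n = R n + conv Q (Sol R Q) n.
Proof.
move=> Q0 n; rewrite /Sol /=; congr (_ + _); apply: eq_bigr => i _.
case: (posnP i) => [->|ip]; first by rewrite Q0.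
have hi := ltn_ord i.
congr (_ * _); change (solve R Q n (n - i) = solve R Q (n - i).+1 (n - i)); apply: solve_fuel => //; lia.
Qed.

Lemma sol_uniq R Q G1 G2 : Q 0 = 0 ->
  (forall n, G1 n = R n + conv Q G1 n) -> (forall n, G2 n = R n + conv Q G2 n) ->
  G1 =1 G2.
Proof.
move=> Q0 h1 h2; elim/ltn_ind => n IH.
rewrite h1 h2; congr (_ + _); apply: eq_bigr => i _.
case: (posnP i) => [->|ip]; first by rewrite Q0.
have hi := ltn_ord i.
congr (_ * _); apply: IH; lia.
Qed.

Definition Nx P Q := Sol P Q.

Lemma conv_N P Q f : Q 0 = 0 ->
  forall n, conv (Nx P Q) f n = conv P f n + conv Q (conv (Nx P Q) f) n.
Proof.
move=> Q0 n.
rewrite (@conv_ext _ (fun k => P k + conv Q (Nx P Q) k) f f); last by [].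
  by rewrite convDl convA.
by move=> k; rewrite /Nx SolE.
Qed.

Fixpoint domb (b a : seq nat) : bool :=
  match b with
  | [::] => a == [::]
  | c :: b' => match a with
               | [::] => true
               | x :: a' => if x <= c then domb b' a' else domb b' a
               end
  end.

Definition domn (b a : seq nat) : Prop :=
  exists g : nat -> nat, (forall j1 j2, j1 < j2 -> j2 < size a -> g j1 < g j2) /\
    (forall j, j < size a -> g j < size b /\ nth 0 a j <= nth 0 b (g j)).

Lemma domb_domn b a : domb b a -> domn b a.
Proof.
elim: b a => [|c b IH] a /=.
  move/eqP=> ->; exists (fun _ => 0); split=> //.
case: a => [_|x a]; first by exists (fun _ => 0).
case: ifP => hxc.
  move/IH => [g [g1 g2]].
  exists (fun j => if j is j'.+1 then (g j').+1 else 0); split.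
    move=> [|j1] [|j2] //= h1 h2; rewrite ltnS; apply: g1; by [|rewrite -ltnS|rewrite ltnS in h1 h2 *].
  move=> [|j] /= hj; first by [].
  have := g2 j hj; case=> h3 h4; split=> //.
move/IH => [g [g1 g2]].
exists (fun j => (g j).+1); split.
  by move=> j1 j2 h1 h2; rewrite ltnS; apply: g1.
move=> j hj; have := g2 j hj; case=> h3 h4; split=> //.
Qed.

Lemma domn_domb b a : domn b a -> domb b a.
Proof.
elim: b a => [|c b IH] a /=.
  case: a => [|x a] // [g [_ g2]].
  by have := g2 0 (ltn0Sn _); case.
case: a => [//|x a] [g [g1 g2]].
case: ifP => hxc.
  apply: IH; exists (fun j => (g j.+1).-1); split.
    move=> j1 j2 h1 h2.
    have := g1 j1.+1 j2.+1 h1 h2; have := g1 0 j1.+1 (ltn0Sn _) (ltn_trans h1 h2).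
    lia.
  move=> j hj.
  have := g1 0 j.+1 (ltn0Sn _) hj; have := g2 j.+1 hj => /=.
  case: (g j.+1) => [|k] //= [h3 h4] _; split=> //.
have g0 : 0 < g 0.
  have := g2 0 (ltn0Sn _); case: (g 0) => [|k] //= [_ h]; by rewrite h in hxc.
have gp : forall j, j < size (x :: a) -> 0 < g j.
  move=> [|j] hj //; have := g1 0 j.+1 (ltn0Sn _) hj; lia.
apply: IH; exists (fun j => (g j).-1); split.
  move=> j1 j2 h1 h2.
  have := g1 j1 j2 h1 h2; have := gp j1 (ltn_trans h1 h2); lia.
move=> j hj.
have := gp j hj; have := g2 j hj.
case: (g j) => [|k] //= [h3 h4] _; split=> //.
Qed.

Lemma dominates_domn b a : dominates b a <-> domn b a.
Proof.
split.
  move=> [f [f1 f2]].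
  exists (fun j => oapp (fun o => val (f o)) 0 (insub j : option 'I_(size a))); split.
    move=> j1 j2 h1 h2.
    have h1' : j1 < size a by exact: ltn_trans h1 h2.
    rewrite (@insubT _ (fun k => k < size a) 'I_(size a) j1 h1') (@insubT _ (fun k => k < size a) 'I_(size a) j2 h2) /=; exact: f1.
  move=> j hj; rewrite (@insubT _ (fun k => k < size a) 'I_(size a) j hj) /=; split; first exact: ltn_ord.
  exact: (f2 (Ordinal hj)).
move=> [g [g1 g2]].
exists (fun o : 'I_(size a) => Ordinal (proj1 (g2 _ (ltn_ord o)))); split.
  move=> j1 j2 /= h; exact: g1.
move=> j /=; exact: (proj2 (g2 _ (ltn_ord j))).
Qed.

Lemma dominatesP b a : dominates b a <-> domb b a.
Proof.
rewrite dominates_domn; split; [exact: domn_domb | exact: domb_domn].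
Qed.

Fixpoint compsf (fuel n : nat) : seq (seq nat) :=
  if n is 0 then [:: [::]] else
  if fuel is k.+1 then [seq c :: b | c <- iota 1 n, b <- compsf k (n - c)] else [::].

Lemma compsfS k n : compsf k.+1 n.+1 = [seq c :: b | c <- iota 1 n.+1, b <- compsf k (n.+1 - c)].
Proof. by []. Qed.

Lemma compsf_fuel k1 k2 n : n <= k1 -> n <= k2 -> compsf k1 n = compsf k2 n.
Proof.
elim: k1 k2 n => [|j1 IH] [|j2] [|n] h1 h2 //.
rewrite !compsfS; congr flatten; apply/eq_in_map => c; rewrite mem_iota => hc.
congr map; apply: IH; lia.
Qed.

Lemma mem_compsf k n b : n <= k ->
  (b \in compsf k n) = (all (fun x => 0 < x) b && (sumn b == n)).
Proof.
elim: k n b => [|j IH] [|n] b hn //.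
- rewrite /= in_cons in_nil orbF; case: b => [|x b] //=; case: x => [|x] //=; by rewrite addSn andbF.
- rewrite /= in_cons in_nil orbF; case: b => [|x b] //=; case: x => [|x] //=; by rewrite addSn andbF.
rewrite compsfS; apply/allpairsPdep/idP.
  move=> [c [b' [hc hb' ->]]].
  move: hc; rewrite mem_iota => hc.
  move: hb'; rewrite IH; last by lia.
  move=> /andP [h1 /eqP h2] /=; rewrite h1 andbT; apply/andP; split; first lia.
  apply/eqP; lia.
case: b => [|c b'] //= /andP [/andP [hc hb] /eqP hs].
exists c, b'; split=> //.
  change (c \in iota 1 n.+1); rewrite mem_iota; apply/andP; split; lia.
rewrite IH; last by lia.
by rewrite hb /=; apply/eqP; lia.
Qed.

Lemma uniq_compsf k n : uniq (compsf k n).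
Proof.
elim: k n => [|j IH] [|n] //; rewrite compsfS.
apply: allpairs_uniq_dep; first exact: iota_uniq.
  by move=> c _; exact: IH.
by move=> [c1 b1] [c2 b2] _ _ /= [-> ->].
Qed.

Definition comps n := compsf n n.

Definition F (a : seq nat) (n : nat) : nat := count (fun b => domb b a) (comps n).

Definition Pc (x c : nat) : nat := (0 < c) && (x <= c).
Definition Qc (x c : nat) : nat := (0 < c) && (c < x).

Lemma F_rec x a n : F (x :: a) n = conv (Pc x) (F a) n + conv (Qc x) (F (x :: a)) n.
Proof.
case: n => [|n]; first by rewrite /F /comps /conv !big_ord1 /Pc /Qc.
rewrite {1}/F /comps compsfS count_flatten -map_comp sumnE big_map.
rewrite /conv -big_split /= -(big_mkord xpredT (fun i => Pc x i * F a (n.+1 - i) + Qc x i * F (x :: a) (n.+1 - i))).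
rewrite big_ltn // /Pc /Qc /= add0n.
rewrite /index_iota subSS subn0.
apply: eq_big_seq => c hc; have : c \in iota 1 n.+1 by []. rewrite mem_iota => /andP [h1 h2].
rewrite /= count_map (@compsf_fuel n (n.+1 - c) (n.+1 - c)); try lia.
rewrite h1 /=.
rewrite ltnNge; case hxc: (x <= c); rewrite /F /comps.
  rewrite mul1n mul0n addn0; apply: eq_count => b /=; by rewrite hxc.
rewrite mul0n mul1n add0n; apply: eq_count => b /=; by rewrite hxc.
Qed.

Lemma Qc0 x : Qc x 0 = 0. Proof. by []. Qed.

Lemma F_conv x a : F (x :: a) =1 conv (Nx (Pc x) (Qc x)) (F a).
Proof.
apply: (@sol_uniq (conv (Pc x) (F a)) (Qc x)) => // n.
- exact: F_rec.
- exact: conv_N.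
Qed.

Lemma F_cons z a1 a2 : F a1 =1 F a2 -> F (z :: a1) =1 F (z :: a2).
Proof. by move=> h n; rewrite !F_conv; apply: conv_ext. Qed.

Lemma F_swap x y a : F (x :: y :: a) =1 F (y :: x :: a).
Proof.
move=> n; set Nx' := Nx (Pc x) (Qc x); set Ny := Nx (Pc y) (Qc y).
have -> : F (x :: y :: a) n = conv Nx' (conv Ny (F a)) n.
  by rewrite F_conv; apply: conv_ext => // k; exact: F_conv.
have -> : F (y :: x :: a) n = conv Ny (conv Nx' (F a)) n.
  by rewrite F_conv; apply: conv_ext => // k; exact: F_conv.
rewrite !convA; apply: conv_ext => // k; exact: convC.
Qed.

Lemma F_move x p s : F (x :: p ++ s) =1 F (p ++ x :: s).
Proof.
elim: p => [|z p IH] //= n.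
by rewrite F_swap; apply: F_cons.
Qed.

Lemma F_perm a a' : perm_eq a a' -> F a =1 F a'.
Proof.
elim: a a' => [|x r IH] a' hp.
  by move: (perm_size hp); case: a' hp.
have hx : x \in a' by rewrite -(perm_mem hp) mem_head.
case/splitPr: hx hp => p s hp.
have h2 : perm_eq (x :: r) (x :: p ++ s).
  apply: (perm_trans hp); rewrite -(cat1s x s) perm_catCA; exact: perm_refl.
move: h2; rewrite perm_cons => {}hp n.
rewrite -F_move; exact: F_cons (IH _ hp) n.
Qed.

Lemma size_F a n (L : seq (seq nat)) : uniq L ->
  (forall b, b \in L <-> (is_composition b /\ sumn b = n /\ dominates b a)) ->
  size L = F a n.
Proof.
move=> uL hL.
have e : L =i filter (fun b => domb b a) (comps n).
  move=> b; rewrite mem_filter /comps mem_compsf //.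
  apply/idP/idP.
    by move/hL=> [h1 [h2 /dominatesP h3]]; rewrite h3 h1 h2 eqxx.
  move=> /andP [h3 /andP [h1 /eqP h2]]; apply/hL; split=> //; split=> //.
  exact/dominatesP.
have := uniq_size_uniq uL e.
rewrite filter_uniq ?uniq_compsf // => /esym /eqP <-.
by rewrite size_filter.
Qed.

Theorem lemma2p3 (a a' : seq nat) :
  is_composition a -> is_composition a' -> perm_eq a a' ->
  forall (n : nat) (L L' : seq (seq nat)),
    uniq L -> uniq L' ->
    (forall b, b \in L <-> (is_composition b /\ sumn b = n /\ dominates b a)) ->
    (forall b, b \in L' <-> (is_composition b /\ sumn b = n /\ dominates b a')) ->
    size L = size L'.
Proof.
move=> _ _ hp n L L' uL uL' hL hL'.
by rewrite (size_F uL hL) (size_F uL' hL') (F_perm hp).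
Qed.
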